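(* Let $f\colon\mathbb{R}\to\mathbb{R}$ be an injective function. Then $\alpha(f)=0$ if and only if $f$ is monotone.
   Context: $\mathrm{Conf}_2(\mathbb{R})=\{(x,y)\in\mathbb{R}^2: x\neq y\}$. $S^0=\{\pm1\}$ with the geodesic (angle) metric $d(u,v)=\arccos(uv)$, so $d(1,-1)=\pi$. For a topological space $X$ and a metric space $Y$, $\delta(g)=\inf\{\delta\ge 0 : \text{for every } x\in X \text{ there is an open neighborhood } U_x \text{ of } x \text{ with } \operatorname{diam}(g(U_x))\le\delta\}$. For injective $f\colon\mathbb{R}\to\mathbb{R}$, $\Phi_f\colon\mathrm{Conf}_2(\mathbb{R})\to S^0$, $\Phi_f(x,y)=\frac{f(x)-f(y)}{|f(x)-f(y)|}$, and $\alpha(f)=\delta(\Phi_f)$. *)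

(* Defs.v *)
From Stdlib Require Import Reals.
From Coquelicot Require Import Coquelicot.
Open Scope R_scope.

Definition Conf2 : Type := { p : R * R | fst p <> snd p }.

Definition Conf2_open (V : Conf2 -> Prop) : Prop :=
  exists U : R * R -> Prop,
    @open (prod_UniformSpace R_UniformSpace R_UniformSpace) U /\
    forall z : Conf2, V z <-> U (proj1_sig z).

(* S^0 = {1,-1} ⊂ R with the geodesic (angle) metric d(u,v) = arccos(u v). *)
Definition S0_dist (u v : R) : R := acos (u * v).

(* The set of admissible δ's in the definition of δ(g), for g : X -> Y with
   X a space given by its open sets and Y a metric space (dist d).
   diam(g(U)) <= δ  is  "all pairwise distances in g(U) are <= δ". *)
Definition delta_adm {X Y : Type} (isopen : (X -> Prop) -> Prop)
  (d : Y -> Y -> R) (g : X -> Y) (δ : R) : Prop :=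
  0 <= δ /\
  forall x : X, exists U : X -> Prop,
    isopen U /\ U x /\
    forall u v : X, U u -> U v -> d (g u) (g v) <= δ.

Definition delta {X Y : Type} (isopen : (X -> Prop) -> Prop)
  (d : Y -> Y -> R) (g : X -> Y) : Rbar :=
  Glb_Rbar (delta_adm isopen d g).

Definition Phi (f : R -> R) (z : Conf2) : R :=
  let x := fst (proj1_sig z) in let y := snd (proj1_sig z) in
  (f x - f y) / Rabs (f x - f y).

Definition alpha (f : R -> R) : Rbar := delta Conf2_open S0_dist (Phi f).

Definition injective (f : R -> R) : Prop := forall x y, f x = f y -> x = y.

Definition monotone (f : R -> R) : Prop :=
  (forall x y, x <= y -> f x <= f y) \/ (forall x y, x <= y -> f y <= f x).

(* Main.v *)
Require Import Defs.
From Stdlib Require Import Reals.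
From Coquelicot Require Import Coquelicot.
From Stdlib Require Import Lra Classical.
Open Scope R_scope.

Definition PR := prod_UniformSpace R_UniformSpace R_UniformSpace.

Lemma ball_prod_iff (p q : R * R) (e : R) :
  @ball PR p e q <-> Rabs (fst q - fst p) < e /\ Rabs (snd q - snd p) < e.
Proof.
  split.
  - intros [H1 H2]. unfold ball in H1, H2; simpl in H1, H2.
    unfold AbsRing_ball, abs, minus, plus, opp in H1, H2; simpl in H1, H2.
    split; assumption.
  - intros [H1 H2]. split; unfold ball; simpl;
    unfold AbsRing_ball, abs, minus, plus, opp; simpl; assumption.
Qed.

Lemma open_lt_fst : @open PR (fun p => fst p < snd p).
Proof.
  intros [p1 p2] Hp. change (p1 < p2) in Hp. assert (He : 0 < (p2 - p1) / 2) by lra.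
  exists (mkposreal _ He). intros q Hq. apply ball_prod_iff in Hq.
  destruct q as [q1 q2]. simpl in Hq. destruct Hq as [H1 H2].
  apply Rabs_def2 in H1. apply Rabs_def2 in H2. unfold minus, plus, opp in *; simpl in *. lra.
Qed.

Lemma open_lt_snd : @open PR (fun p => snd p < fst p).
Proof.
  intros [p1 p2] Hp. change (p2 < p1) in Hp. assert (He : 0 < (p1 - p2) / 2) by lra.
  exists (mkposreal _ He). intros q Hq. apply ball_prod_iff in Hq.
  destruct q as [q1 q2]. simpl in Hq. destruct Hq as [H1 H2].
  apply Rabs_def2 in H1. apply Rabs_def2 in H2. unfold minus, plus, opp in *; simpl in *. lra.
Qed.

Definition sgn (u : R) := u / Rabs u.

Lemma sgn_pos u : 0 < u -> sgn u = 1.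
Proof. intros H. unfold sgn. rewrite Rabs_pos_eq by lra. field. lra. Qed.

Lemma sgn_neg u : u < 0 -> sgn u = -1.
Proof. intros H. unfold sgn. rewrite Rabs_left by lra. field. lra. Qed.

Lemma sgn_pm u : u <> 0 -> sgn u = 1 \/ sgn u = -1.
Proof.
  intros H. destruct (Rdichotomy _ _ H).
  - right; apply sgn_neg; lra.
  - left; apply sgn_pos; lra.
Qed.

Lemma fdiff_ne (f : R -> R) (Hf : injective f) x y : x <> y -> f x - f y <> 0.
Proof. intros H E. apply H, Hf. lra. Qed.

Lemma acos_m1 : acos (-1) = PI.
Proof. replace (-1) with (- (1)) by ring. rewrite acos_opp, acos_1. lra. Qed.

Lemma loc_const_cont (G : R -> R) :
  (forall t, exists alp, alp > 0 /\ forall s, Rabs (s - t) < alp -> G s = G t) ->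
  continuity G.
Proof.
  intros H t eps Heps. destruct (H t) as [alp [Ha Hs]].
  exists alp; split; auto. intros s [_ Hd]. simpl in *. unfold R_dist in *.
  rewrite (Hs s Hd). unfold Rminus. rewrite Rplus_opp_r, Rabs_R0. auto.
Qed.

Definition clamp (t : R) := Rmax 0 (Rmin 1 t).

Lemma clamp_bnd t : 0 <= clamp t <= 1.
Proof. unfold clamp, Rmax, Rmin. destruct (Rle_dec 1 t); destruct (Rle_dec 0 _); lra. Qed.

Lemma clamp_lip s t : Rabs (clamp s - clamp t) <= Rabs (s - t).
Proof.
  unfold clamp, Rmax, Rmin.
  destruct (Rle_dec 1 s); destruct (Rle_dec 1 t);
  repeat match goal with |- context [Rle_dec ?a ?b] => destruct (Rle_dec a b) end;
  unfold Rabs; repeat match goal with |- context [Rcase_abs ?a] => destruct (Rcase_abs a) end; lra.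
Qed.

Lemma path_const (f : R -> R) (Hf : injective f) :
  (forall z : Conf2, exists U : Conf2 -> Prop, Conf2_open U /\ U z /\
     forall u v, U u -> U v -> Phi f u = Phi f v) ->
  forall a b c d, a < b -> c < d -> sgn (f a - f b) = sgn (f c - f d).
Proof.
  intros HL a b c d Hab Hcd.
  set (X := fun t => a + clamp t * (c - a)).
  set (Y := fun t => b + clamp t * (d - b)).
  assert (HXY : forall t, X t <> Y t).
  { intros t. unfold X, Y. pose proof (clamp_bnd t) as Hk. set (k := clamp t) in *.
    assert (0 <= (1 - k) * (b - a)) by (apply Rmult_le_pos; lra).
    assert (0 <= k * (d - c)) by (apply Rmult_le_pos; lra).
    destruct (Rle_lt_or_eq_dec _ _ (proj1 Hk)).
    - assert (0 < k * (d - c)) by (apply Rmult_lt_0_compat; lra). intro E. lra.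
    - subst k. intro E. rewrite <- e in E. lra. }
  set (G := fun t => sgn (f (X t) - f (Y t))).
  assert (HG : forall t, G t = 1 \/ G t = -1).
  { intros t. apply sgn_pm, fdiff_ne; auto. }
  assert (Hcont : continuity G).
  { apply loc_const_cont. intros t.
    destruct (HL (exist _ (X t, Y t) (HXY t))) as [U [[U' [HU' HUU']] [HUz HUc]]].
    apply HUU' in HUz. simpl in HUz. destruct (HU' _ HUz) as [eps Heps].
    set (M := 1 + Rabs (c - a) + Rabs (d - b)).
    assert (HM : 0 < M) by (unfold M; pose proof (Rabs_pos (c-a)); pose proof (Rabs_pos (d-b)); lra).
    exists (eps / M). split. { apply Rdiv_lt_0_compat; [apply cond_pos|lra]. }
    intros s Hs.
    assert (HUs : U (exist _ (X s, Y s) (HXY s))).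
    { apply HUU'. simpl. apply Heps. apply ball_prod_iff. simpl.
      pose proof (clamp_lip s t) as Hl.
      assert (Hst : Rabs (s - t) * M < eps).
      { apply (Rmult_lt_compat_r M) in Hs; auto. unfold Rdiv in Hs.
        rewrite Rmult_assoc, Rinv_l, Rmult_1_r in Hs; lra. }
      assert (Hk : forall k, Rabs k <= M - 1 -> Rabs (clamp s * k - clamp t * k) < eps).
      { intros k Hk. replace (clamp s * k - clamp t * k) with ((clamp s - clamp t) * k) by ring.
        rewrite Rabs_mult.
        pose proof (Rabs_pos (clamp s - clamp t)). pose proof (Rabs_pos k).
        pose proof (Rabs_pos (s - t)).
        apply Rle_lt_trans with (Rabs (s - t) * M); [|lra].
        apply Rle_trans with (Rabs (s - t) * Rabs k); [apply Rmult_le_compat_r; lra|].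
        apply Rmult_le_compat_l; lra. }
      unfold X, Y. split.
      - replace (a + clamp s * (c - a) - (a + clamp t * (c - a))) with (clamp s * (c - a) - clamp t * (c - a)) by ring.
        apply Hk. unfold M. pose proof (Rabs_pos (d-b)). lra.
      - replace (b + clamp s * (d - b) - (b + clamp t * (d - b))) with (clamp s * (d - b) - clamp t * (d - b)) by ring.
        apply Hk. unfold M. pose proof (Rabs_pos (c-a)). lra. }
    pose proof (HUc _ _ HUs (proj2 (HUU' (exist _ (X t, Y t) (HXY t))) HUz)) as E.
    unfold Phi in E; simpl in E. exact E. }
  assert (HG0 : G 0 = sgn (f a - f b)).
  { unfold G, X, Y. replace (clamp 0) with 0.
    - do 2 f_equal; f_equal; ring.
    - unfold clamp, Rmin, Rmax. destruct (Rle_dec 1 0); try lra. destruct (Rle_dec 0 0); lra. }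
  assert (HG1 : G 1 = sgn (f c - f d)).
  { unfold G, X, Y. replace (clamp 1) with 1.
    - do 2 f_equal; f_equal; ring.
    - unfold clamp, Rmin, Rmax. destruct (Rle_dec 1 1); try lra. destruct (Rle_dec 0 1); lra. }
  rewrite <- HG0, <- HG1.
  destruct (HG 0) as [E0|E0]; destruct (HG 1) as [E1|E1]; try congruence.
  - exfalso. set (H := fun t => - G t).
    assert (Hc : continuity H) by (apply continuity_opp; auto).
    destruct (IVT H 0 1 Hc) as [z [_ Hz]]; unfold H; try lra.
    unfold H in Hz. destruct (HG z); lra.
  - exfalso. destruct (IVT G 0 1 Hcont) as [z [_ Hz]]; try lra.
    destruct (HG z); lra.
Qed.

Theorem lemma3p9 (f : R -> R) (Hf : injective f) :
  alpha f = Finite 0%R <-> monotone f.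
Proof.
  split.
  - intros Ha. unfold alpha, delta in Ha.
    destruct (classic (exists δ, delta_adm Conf2_open S0_dist (Phi f) δ /\ δ < PI))
      as [[δ [[Hd0 Hd] HdPI]] | Hno].
    + assert (HL : forall z : Conf2, exists U : Conf2 -> Prop, Conf2_open U /\ U z /\
                forall u v, U u -> U v -> Phi f u = Phi f v).
      { intros z. destruct (Hd z) as [U [HU [HUz HUc]]]. exists U. split; [|split]; auto.
        intros u v Hu Hv. specialize (HUc u v Hu Hv). unfold S0_dist in HUc.
        assert (Hpu : Phi f u = 1 \/ Phi f u = -1).
        { apply sgn_pm, fdiff_ne; auto. destruct u; auto. }
        assert (Hpv : Phi f v = 1 \/ Phi f v = -1).
        { apply sgn_pm, fdiff_ne; auto. destruct v; auto. }
        destruct Hpu as [Eu|Eu]; destruct Hpv as [Ev|Ev]; rewrite Eu, Ev in *; auto;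
          exfalso; replace (1 * -1) with (-1) in HUc by ring;
          replace (-1 * 1) with (-1) in HUc by ring; rewrite acos_m1 in HUc; lra. }
      pose proof (path_const f Hf HL) as HP.
      assert (Hfs : f 0 - f 1 <> 0) by (apply fdiff_ne; auto; lra).
      destruct (Rdichotomy _ _ Hfs) as [Hlt|Hgt].
      * left. intros x y Hxy. destruct (Req_dec x y) as [->|Hne]; [lra|].
        assert (E : sgn (f x - f y) = -1).
        { rewrite (HP x y 0 1) by lra. apply sgn_neg; lra. }
        destruct (Rle_dec (f x) (f y)); auto.
        rewrite sgn_pos in E; lra.
      * right. intros x y Hxy. destruct (Req_dec x y) as [->|Hne]; [lra|].
        assert (E : sgn (f x - f y) = 1).
        { rewrite (HP x y 0 1) by lra. apply sgn_pos; lra. }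
        destruct (Rle_dec (f y) (f x)); auto.
        rewrite sgn_neg in E; lra.
    + exfalso.
      destruct (Glb_Rbar_correct (delta_adm Conf2_open S0_dist (Phi f))) as [Hlb _].
      destruct (Glb_Rbar_correct (delta_adm Conf2_open S0_dist (Phi f))) as [_ Hglb].
      assert (Hpi : is_lb_Rbar (delta_adm Conf2_open S0_dist (Phi f)) PI).
      { intros x Hx. simpl. destruct (Rle_dec PI x); auto. exfalso; apply Hno.
        exists x; split; auto; lra. }
      specialize (Hglb _ Hpi). rewrite Ha in Hglb. simpl in Hglb.
      pose proof PI_RGT_0. lra.
  - intros Hm.
    assert (Hc : exists c, (c = 1 \/ c = -1) /\ forall x y, x < y ->
               sgn (f x - f y) = c /\ sgn (f y - f x) = - c).
    { destruct Hm as [Hm|Hm].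
      - exists (-1). split; auto. intros x y Hxy.
        assert (f x < f y).
        { destruct (Rle_lt_or_eq_dec _ _ (Hm x y (Rlt_le _ _ Hxy))); auto.
          apply Hf in e; lra. }
        split; [apply sgn_neg|rewrite sgn_pos]; lra.
      - exists 1. split; auto. intros x y Hxy.
        assert (f y < f x).
        { destruct (Rle_lt_or_eq_dec _ _ (Hm x y (Rlt_le _ _ Hxy))); auto.
          apply Hf in e; lra. }
        split; [apply sgn_pos|rewrite sgn_neg]; lra. }
    destruct Hc as [c [Hc1 Hc]].
    unfold alpha, delta. apply is_glb_Rbar_unique. split.
    + intros x [Hx _]. simpl. auto.
    + intros b Hb. apply Hb. split; [lra|].
      intros [[x y] Hxy]. simpl in Hxy. destruct (Rdichotomy _ _ Hxy) as [Hlt|Hgt].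
      * exists (fun w : Conf2 => fst (proj1_sig w) < snd (proj1_sig w)).
        split; [|split; auto].
        { exists (fun p => fst p < snd p). split; [apply open_lt_fst|]. tauto. }
        intros [[u1 u2] Hu] [[v1 v2] Hv] H1 H2; simpl in *.
        unfold S0_dist, Phi; simpl. fold (sgn (f u1 - f u2)). fold (sgn (f v1 - f v2)).
        rewrite (proj1 (Hc _ _ H1)), (proj1 (Hc _ _ H2)).
        replace (c * c) with 1 by (destruct Hc1; subst; ring). rewrite acos_1; lra.
      * exists (fun w : Conf2 => snd (proj1_sig w) < fst (proj1_sig w)).
        split; [|split; auto].
        { exists (fun p => snd p < fst p). split; [apply open_lt_snd|]. tauto. }
        intros [[u1 u2] Hu] [[v1 v2] Hv] H1 H2; simpl in *.
        unfold S0_dist, Phi; simpl. fold (sgn (f u1 - f u2)). fold (sgn (f v1 - f v2)).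
        rewrite (proj2 (Hc _ _ H1)), (proj2 (Hc _ _ H2)).
        replace (- c * - c) with 1 by (destruct Hc1; subst; ring). rewrite acos_1; lra.
Qed.
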